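(* Assume that for every $k\ge 1$ the function $\hat{\mathcal L}(\cdot,y_k)$ is convex, that $\tau_1\tau_2\|K\|^2\le 1/4$ and $\tau_1\le 1/(4L)$. For $k\ge1$ define \[\varepsilon_k:=\hat{\mathcal L}(x_k,y_k)-\ell_{\hat{\mathcal L}(\cdot,y_k)}(x_k;x_{k-1}).\] Let $(x_*,y_* )$ be a saddle point of $\Phi$. Then: (a) for every $k\ge1$, \[r^y_k:=\frac{y^{k-1}-y^k}{\tau_2}\in\partial\big[-\hat{\mathcal L}(x_k,\cdot)+h_2\big](y_k),\qquad r^x_k:=\frac{x_{k-1}-x_k}{\tau_1}\in\partial_{\varepsilon_k}\big[\hat{\mathcal L}(\cdot,y_k)+h_1\big](x_k);\] (b) for every $k\ge1$, $\varepsilon_k\le \frac{1}{8\tau_1}\|x_k-x_{k-1}\|^2$ and $\frac{1}{\tau_2}\|y^k-y_k\|^2\le\frac{1}{4\tau_1}\|x_k-x_{k-1}\|^2$; (c) for every $N\ge1$, \[\frac{1}{4\tau_1}\sum_{k=1}^N\|x_k-x_{k-1}\|^2+\frac{1}{2\tau_2}\sum_{k=1}^N\|y_k-y^{k-1}\|^2\le\frac{1}{2\tau_1}\|x_*-x_0\|^2+\frac{1}{2\tau_2}\|y_*-y_0\|^2.\]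
   Context: Let $n,m_1,m_2$ be positive integers, $Q\in\mathbb R^{n\times n}$ symmetric, $c\in\mathbb R^n$, $A\in\mathbb R^{m_1\times n}$, $b\in\mathbb R^{m_1}$, $B\in\mathbb R^{m_2\times n}$, $d\in\mathbb R^{m_2}$. Let $K:=-\begin{pmatrix}A\\ B\end{pmatrix}\in\mathbb R^{(m_1+m_2)\times n}$ and $r:=(b;d)\in\mathbb R^{m_1+m_2}$. Fix $\rho\ge0$ and let $\mathbf 1$ be the all-ones vector. For $x\in\mathbb R^n$, $y\in\mathbb R^{m_1+m_2}$ define $\hat{\mathcal L}(x,y):=\langle x,Qx\rangle+\langle c,x\rangle+\langle y,Kx+r\rangle+\rho\langle x,\mathbf 1-x\rangle$, so $\nabla_x\hat{\mathcal L}(x,y)=c+\rho\mathbf 1+K^\top y+2Qx-2\rho x$ and $\nabla_y\hat{\mathcal L}(x,y)=Kx+r$. Let $Y:=\mathbb R_+^{m_1}\times\mathbb R^{m_2}$, $h_1$ the indicator of $[0,1]^n$ and $h_2$ the indicator of $Y$ (value $0$ on the set, $+\infty$ outside), and $\Phi(x,y):=\hat{\mathcal L}(x,y)+h_1(x)-h_2(y)$. A saddle point $(x_*,y_* )$ of $\Phi$ satisfies $\Phi(x_*,y)\le\Phi(x_*,y_* )\le\Phi(x,y_* )$ for all $x,y$. Let $L:=2(\|Q\|+\rho)$, where $\|\cdot\|$ on matrices is the spectral norm. For differentiable $f$, $\ell_f(x;x'):=f(x')+\langle\nabla f(x'),x-x'\rangle$. For a convex function $g$, $\partial g$ is its subdifferential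 and $\partial_\varepsilon g(x):=\{v: g(z)\ge g(x)+\langle v,z-x\rangle-\varepsilon\ \forall z\}$. PDHG iterates with step sizes $\tau_1,\tau_2>0$: choose $x_0\in[0,1]^n$, $y_0\in\mathbb R^{m_1+m_2}$, set $x_{-1}:=x_0$, $\bar x_0:=x_0$, and for $k\ge1$: $y_k=\Pi_Y(y_{k-1}+\tau_2(K\bar x_{k-1}+r))$, $x_k=\Pi_{[0,1]^n}(x_{k-1}-\tau_1\nabla_x\hat{\mathcal L}(x_{k-1},y_k))$, $\bar x_k=2x_k-x_{k-1}$, where $\Pi$ denotes Euclidean projection. Auxiliary sequence: $y^0:=y_0$ and $y^k:=y_k+\tau_2K(\bar x_k-x_k)$ for $k\ge1$. *)

(* Defs.v *)
From HB Require Import structures.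
From mathcomp Require Import all_boot all_order all_algebra.
From mathcomp Require Import all_classical all_reals.
Set Implicit Arguments. Unset Strict Implicit. Unset Printing Implicit Defensive.
Import Order.TTheory GRing.Theory Num.Theory.
Local Open Scope ring_scope.
Local Open Scope classical_set_scope.

Section PDHG.
Variable R : realType.

Definition dot (p : nat) (u v : 'cV[R]_p) : R := \sum_(i < p) u i 0 * v i 0.
Definition enorm (p : nat) (u : 'cV[R]_p) : R := Num.sqrt (dot u u).

Definition opnorm (p q : nat) (M : 'M[R]_(p, q)) : R :=
  sup [set t : R | exists u : 'cV[R]_q, enorm u <= 1 /\ t = enorm (M *m u)].

Definition ones (p : nat) : 'cV[R]_p := const_mx 1.

Definition in_box (p : nat) (u : 'cV[R]_p) : Prop := forall i, 0 <= u i 0 <= 1.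
Definition inY (m1 m2 : nat) (u : 'cV[R]_(m1 + m2)) : Prop :=
  forall i : 'I_m1, 0 <= u (lshift m2 i) 0.

Definition indic (p : nat) (C : 'cV[R]_p -> Prop) (u : 'cV[R]_p) : \bar R :=
  if `[< C u >] then 0%E else +oo%E.

Definition is_proj (p : nat) (C : 'cV[R]_p -> Prop) (v w : 'cV[R]_p) : Prop :=
  C w /\ forall z, C z -> enorm (w - v) <= enorm (z - v).

Definition convex_fun (p : nat) (f : 'cV[R]_p -> R) : Prop :=
  forall (u v : 'cV[R]_p) (t : R), 0 <= t <= 1 ->
    f (t *: u + (1 - t) *: v) <= t * f u + (1 - t) * f v.

Definition esubdiff (p : nat) (g : 'cV[R]_p -> \bar R) (eps : R) (u : 'cV[R]_p)
  : set 'cV[R]_p :=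
  [set v | forall z, (g u + (dot v (z - u) - eps)%:E <= g z)%E].
Definition subdiff (p : nat) (g : 'cV[R]_p -> \bar R) (u : 'cV[R]_p) : set 'cV[R]_p :=
  esubdiff g 0 u.

Definition Lhat (n q : nat) (Q : 'M[R]_n) (c : 'cV[R]_n) (K : 'M[R]_(q, n))
  (r : 'cV[R]_q) (rho : R) (x : 'cV[R]_n) (y : 'cV[R]_q) : R :=
  dot x (Q *m x) + dot c x + dot y (K *m x + r) + rho * dot x (ones n - x).

Definition gradx (n q : nat) (Q : 'M[R]_n) (c : 'cV[R]_n) (K : 'M[R]_(q, n))
  (rho : R) (x : 'cV[R]_n) (y : 'cV[R]_q) : 'cV[R]_n :=
  c + rho *: ones n + K^T *m y + 2 *: (Q *m x) - (2 * rho) *: x.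

Definition lin (n : nat) (f : 'cV[R]_n -> R) (grad : 'cV[R]_n -> 'cV[R]_n)
  (x x' : 'cV[R]_n) : R := f x' + dot (grad x') (x - x').

Definition saddle (n q : nat) (Phi : 'cV[R]_n -> 'cV[R]_q -> \bar R)
  (xs : 'cV[R]_n) (ys : 'cV[R]_q) : Prop :=
  forall x y, (Phi xs y <= Phi xs ys)%E /\ (Phi xs ys <= Phi x ys)%E.

Definition xbar (n : nat) (x : nat -> 'cV[R]_n) (k : nat) : 'cV[R]_n :=
  if k is k'.+1 then 2 *: x k - x k' else x 0%N.

End PDHG.

(* Main.v *)
Require Import Defs.
From HB Require Import structures.
From mathcomp Require Import all_boot all_order all_algebra.
From mathcomp Require Import all_classical all_reals.
From mathcomp Require Import ring lra.
Import Order.TTheory GRing.Theory Num.Theory.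
Local Open Scope ring_scope.
Local Open Scope classical_set_scope.

Section Dot.
Context {R : realType}.
Implicit Types (p : nat).

Lemma dotE {p} (u v : 'cV[R]_p) : dot u v = (u^T *m v) 0 0.
Proof. by rewrite /dot mxE; apply: eq_bigr => i _; rewrite mxE. Qed.

Lemma dotC {p} (u v : 'cV[R]_p) : dot u v = dot v u.
Proof. by rewrite /dot; apply: eq_bigr => i _; rewrite mulrC. Qed.

Lemma dotDl {p} (u v w : 'cV[R]_p) : dot (u + v) w = dot u w + dot v w.
Proof. by rewrite /dot -big_split; apply: eq_bigr => i _; rewrite mxE mulrDl. Qed.

Lemma dotZl {p} a (u w : 'cV[R]_p) : dot (a *: u) w = a * dot u w.
Proof. by rewrite /dot mulr_sumr; apply: eq_bigr => i _; rewrite mxE mulrA. Qed.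

Lemma dotNl {p} (u w : 'cV[R]_p) : dot (- u) w = - dot u w.
Proof. by rewrite -scaleN1r dotZl mulN1r. Qed.

Lemma dotBl {p} (u v w : 'cV[R]_p) : dot (u - v) w = dot u w - dot v w.
Proof. by rewrite dotDl dotNl. Qed.

Lemma dotDr {p} (u v w : 'cV[R]_p) : dot w (u + v) = dot w u + dot w v.
Proof. by rewrite dotC dotDl !(dotC w). Qed.
Lemma dotZr {p} a (u w : 'cV[R]_p) : dot w (a *: u) = a * dot w u.
Proof. by rewrite dotC dotZl dotC. Qed.
Lemma dotNr {p} (u w : 'cV[R]_p) : dot w (- u) = - dot w u.
Proof. by rewrite dotC dotNl dotC. Qed.
Lemma dotBr {p} (u v w : 'cV[R]_p) : dot w (u - v) = dot w u - dot w v.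
Proof. by rewrite dotDr dotNr. Qed.
Lemma dot0l {p} (w : 'cV[R]_p) : dot 0 w = 0.
Proof. by rewrite -(scale0r 0) dotZl mul0r. Qed.

Lemma dot_mulmx {p} q (M : 'M[R]_(p,q)) u v : dot u (M *m v) = dot (M^T *m u) v.
Proof. by rewrite !dotE mulmxA trmx_mul trmxK. Qed.

Lemma dot_ge0 {p} (u : 'cV[R]_p) : 0 <= dot u u.
Proof. by apply: sumr_ge0 => i _; apply: mulr_ge0_le0 || rewrite -expr2 sqr_ge0. Qed.

Lemma dot_eq0 {p} (u : 'cV[R]_p) : dot u u = 0 -> u = 0.
Proof.
move=> /eqP; rewrite psumr_eq0 => [/allP H|i _]; last by rewrite -expr2 sqr_ge0.
apply/matrixP => i j; rewrite (ord1 j) mxE.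
by have := H i (mem_index_enum _); rewrite mulf_eq0 orbb => /eqP.
Qed.

Lemma enorm_sq {p} (u : 'cV[R]_p) : enorm u ^+ 2 = dot u u.
Proof. by rewrite /enorm sqr_sqrtr // dot_ge0. Qed.

Lemma enorm_ge0 {p} (u : 'cV[R]_p) : 0 <= enorm u.
Proof. exact: sqrtr_ge0. Qed.

Lemma enormZ {p} a (u : 'cV[R]_p) : enorm (a *: u) = `|a| * enorm u.
Proof.
by rewrite /enorm dotZl dotZr mulrA -expr2 sqrtrM ?sqr_ge0 // sqrtr_sqr.
Qed.

Lemma dot_flip {p} (u v : 'cV[R]_p) : dot (u - v) (u - v) = dot (v - u) (v - u).
Proof. by rewrite -opprB dotNl dotNr opprK. Qed.

Lemma polar {p} (a b c e : 'cV[R]_p) :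
  dot (a - b) (c - e) = (dot (c - b) (c - b) - dot (c - a) (c - a)
     + dot (a - e) (a - e) - dot (b - e) (b - e)) / 2.
Proof.
rewrite !dotBl !dotBr ?(dotC b a) ?(dotC c a) ?(dotC e a) ?(dotC c b) ?(dotC e b) ?(dotC e c).
by field.
Qed.

Lemma CS {p} (u v : 'cV[R]_p) : dot u v <= enorm u * enorm v.
Proof.
have [->|ua] := eqVneq u 0; first by rewrite dot0l mulr_ge0 ?enorm_ge0.
have [->|va] := eqVneq v 0; first by rewrite dotC dot0l mulr_ge0 ?enorm_ge0.
have ap : 0 < enorm u.
  rewrite lt_neqAle enorm_ge0 andbT; apply/eqP => h; move/eqP: ua; apply; apply: dot_eq0.
  by rewrite -enorm_sq -h expr0n.
have bp : 0 < enorm v.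
  rewrite lt_neqAle enorm_ge0 andbT; apply/eqP => h; move/eqP: va; apply; apply: dot_eq0.
  by rewrite -enorm_sq -h expr0n.
have := dot_ge0 (enorm v *: u - enorm u *: v).
rewrite !dotBl !dotBr !dotZl !dotZr -!enorm_sq (dotC v u) => h.
set a := enorm u in ap h *; set b := enorm v in bp h *; set d := dot u v in h *.
have ab : 0 < a * b by apply: mulr_gt0.
have : 0 <= (a * b) * (a * b - d) by nra.
rewrite pmulr_rge0 // subr_ge0 //.
Qed.

End Dot.

Section Op.
Context {R : realType}.

Lemma coord_le1 {p} (u : 'cV[R]_p) j : enorm u <= 1 -> `|u j 0| <= 1.
Proof.
move=> hu.
have h1 : dot u u <= 1 by rewrite -enorm_sq; have := enorm_ge0 u; nra.
have h2 : u j 0 * u j 0 <= dot u u.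
  rewrite /dot (bigD1 j) //= lerDl; apply: sumr_ge0 => i _; by rewrite -expr2 sqr_ge0.
rewrite ler_norml; apply/andP; split; nra.
Qed.

Lemma opnorm_ub {p q} (M : 'M[R]_(p,q)) :
  has_ubound [set t : R | exists u : 'cV[R]_q, enorm u <= 1 /\ t = enorm (M *m u)].
Proof.
exists (Num.sqrt (\sum_i (\sum_j `|M i j|) ^+ 2)) => t [u [hu ->]].
rewrite /enorm; apply: ler_wsqrtr; rewrite /dot; apply: ler_sum => i _.
have hC : `|(M *m u) i 0| <= \sum_j `|M i j|.
  rewrite mxE; apply: le_trans (ler_norm_sum _ _ _) _; apply: ler_sum => j _.
  by rewrite normrM ler_piMr // coord_le1.
have e : (M *m u) i 0 * (M *m u) i 0 = `|(M *m u) i 0| * `|(M *m u) i 0|.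
  by rewrite -normrM ger0_norm // -expr2 sqr_ge0.
by rewrite e expr2; apply: ler_pM.
Qed.

Lemma opnorm_bound {p q} (M : 'M[R]_(p,q)) (u : 'cV_q) :
  enorm (M *m u) <= opnorm M * enorm u.
Proof.
have [->|un] := eqVneq u 0.
  by rewrite mulmx0 /enorm !dot0l sqrtr0 mulr0.
have ep : 0 < enorm u.
  rewrite lt_neqAle enorm_ge0 andbT; apply/eqP => h; move/eqP: un; apply; apply: dot_eq0.
  by rewrite -enorm_sq -h expr0n.
have h1 : enorm ((enorm u)^-1 *: u) <= 1.
  by rewrite enormZ ger0_norm ?invr_ge0 ?enorm_ge0 // mulVf ?gt_eqF.
have := ub_le_sup (opnorm_ub M)
  (ex_intro _ ((enorm u)^-1 *: u) (conj h1 erefl)).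
rewrite -/(opnorm M) -scalemxAr enormZ ger0_norm ?invr_ge0 ?enorm_ge0 // => h.
by rewrite -ler_pdivrMr // mulrC.
Qed.

Lemma proj_vi {p} (C : 'cV[R]_p -> Prop) v w z :
  (forall a b t, C a -> C b -> 0 <= t <= 1 -> C (a + t *: (b - a))) ->
  is_proj C v w -> C z -> dot (v - w) (z - w) <= 0.
Proof.
move=> Cc [Cw Hmin] Cz.
have key : forall t, 0 <= t <= 1 ->
    0 <= 2 * t * dot (w - v) (z - w) + t ^+ 2 * dot (z - w) (z - w).
  move=> t ht; have := Hmin _ (Cc _ _ t Cw Cz ht).
  rewrite /enorm ler_sqrt ?dot_ge0 //.
  have -> : w + t *: (z - w) - v = (w - v) + t *: (z - w) by rewrite addrAC.
  move: (w - v) (z - w) => e h0.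
  rewrite !dotDl !dotDr !dotZl !dotZr (dotC h0 e) expr2; nra.
rewrite -opprB dotNl; set D := dot (z - w) (z - w); set a := dot (w - v) (z - w).
rewrite oppr_le0 leNgt; apply/negP => ha.
have Dge : 0 <= D by apply: dot_ge0.
set A := - a.
have hA : 0 < A by rewrite /A oppr_gt0.
have pos : 0 < A + D by lra.
set t := A / (A + D).
have tp : 0 < t by apply: divr_gt0.
have tA : t * (A + D) = A by rewrite /t mulfVK // gt_eqF.
have t1 : t <= 1 by rewrite /t ler_pdivrMr // mul1r; lra.
have := key t; rewrite ltW //= t1 => /(_ isT) h.
have aA : a = - A by rewrite /A opprK.
rewrite -/a -/D aA in h.
have : 0 <= t * (- 2 * A + t * D) by rewrite expr2 in h; lra.
rewrite pmulr_rge0 // => h2.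
have tAp : 0 < t * A by apply: mulr_gt0.
rewrite mulrDr in tA; lra.
Qed.

End Op.

Section Q.
Context {R : realType}.

Definition qf {n} (Q : 'M[R]_n) rho (d : 'cV[R]_n) := dot d (Q *m d) - rho * dot d d.

Lemma Lhat_exp {n q} (Q : 'M[R]_n) c (K : 'M[R]_(q,n)) r rho u d y : Q^T = Q ->
  Lhat Q c K r rho (u + d) y =
  Lhat Q c K r rho u y + dot (gradx Q c K rho u y) d + qf Q rho d.
Proof.
move=> QT.
have sym : dot (Q *m d) u = dot (Q *m u) d.
  by rewrite -{1}QT -dot_mulmx dotC.
rewrite /Lhat /gradx /qf !mulmxDr !(dotDl, dotDr, dotBl, dotBr, dotZl, dotZr, dotNl, dotNr, dot_mulmx) QT sym.
rewrite (dotC (ones R n) d) (dotC d u).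


ring.
Qed.
End Q.

Section Q2.
Context {R : realType}.

Lemma qfZ {n} (Q : 'M[R]_n) rho s d : qf Q rho (s *: d) = s ^+ 2 * qf Q rho d.
Proof. by rewrite /qf -scalemxAr !dotZl !dotZr; ring. Qed.

Lemma conv_qf {n q} (Q : 'M[R]_n) c (K : 'M[R]_(q,n)) r rho y : Q^T = Q ->
  convex_fun (fun u => Lhat Q c K r rho u y) -> forall d, 0 <= qf Q rho d.
Proof.
move=> QT hc d.
have e1 := Lhat_exp Q c K r rho 0 d y QT.
have e2 := Lhat_exp Q c K r rho 0 (2^-1 *: d) y QT.
rewrite add0r in e1; rewrite add0r qfZ dotZr in e2.
have := hc d 0 (2^-1).
rewrite scaler0 addr0 e1 e2.
have h : 0 <= (2:R)^-1 <= 1 by apply/andP; split; lra.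
move=> /(_ h); lra.
Qed.

Lemma grad_ineq {n q} (Q : 'M[R]_n) c (K : 'M[R]_(q,n)) r rho y : Q^T = Q ->
  convex_fun (fun u => Lhat Q c K r rho u y) -> forall u z,
  Lhat Q c K r rho u y + dot (gradx Q c K rho u y) (z - u) <= Lhat Q c K r rho z y.
Proof.
move=> QT hc u z.
have := Lhat_exp Q c K r rho u (z - u) y QT; rewrite subrKC => ->.
have := @conv_qf _ _ Q c K r rho y QT hc (z - u); lra.
Qed.

Lemma indic_in {p} (C : 'cV[R]_p -> Prop) u : C u -> indic C u = 0%E.
Proof. by rewrite /indic; case: asboolP. Qed.
Lemma indic_out {p} (C : 'cV[R]_p -> Prop) u : ~ C u -> indic C u = +oo%E.
Proof. by rewrite /indic; case: asboolP. Qed.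
Arguments indic_in {p C u}.
Arguments indic_out {p C u}.

Lemma saddle_facts {n q} (f : 'cV[R]_n -> 'cV[R]_q -> R) C1 C2 xs ys x0 y0 :
  C1 x0 -> C2 y0 ->
  saddle (fun u v => ((f u v)%:E + indic C1 u - indic C2 v)%E) xs ys ->
  [/\ C1 xs, C2 ys, (forall y, C2 y -> f xs y <= f xs ys) &
      (forall x, C1 x -> f xs ys <= f x ys)].
Proof.
move=> h0 h1 S.
have ysY : C2 ys.
  case: (pselect (C2 ys)) => // nys; exfalso.
  have := (S x0 y0).1; rewrite (indic_out nys) (indic_in h1).
  case: (pselect (C1 xs)) => hx; [rewrite (indic_in hx)|rewrite (indic_out hx)] => /=.
  - by rewrite addeNy leeNy_eq oppr0 !adde0.
  - by rewrite addeNy leeNy_eq oppr0 adde0 addey.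
have xsB : C1 xs.
  case: (pselect (C1 xs)) => // nxs; exfalso.
  have := (S x0 ys).2; rewrite (indic_out nxs) (indic_in h0) (indic_in ysY) /=.
  by rewrite oppr0 !adde0 addey // leye_eq.
split => //.
- move=> y hy; have := (S x0 y).1.
  by rewrite (indic_in hy) (indic_in ysY) (indic_in xsB) /= oppr0 !adde0 lee_fin.
- move=> x hx; have := (S x ys).2.
  by rewrite (indic_in hx) (indic_in ysY) (indic_in xsB) /= oppr0 !adde0 lee_fin.
Qed.
End Q2.
Arguments indic_in {R p C u}.
Arguments indic_out {R p C u}.

Section Conv.
Context {R : realType}.
Lemma box_conv {n} (a b : 'cV[R]_n) t :
  in_box a -> in_box b -> 0 <= t <= 1 -> in_box (a + t *: (b - a)).
Proof.
move=> ha hb /andP[t0 t1] i; rewrite !mxE.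
have /andP[? ?] := ha i; have /andP[? ?] := hb i; apply/andP; split; nra.
Qed.
Lemma Y_conv {m1 m2} (a b : 'cV[R]_(m1 + m2)) t :
  inY a -> inY b -> 0 <= t <= 1 -> inY (a + t *: (b - a)).
Proof.
move=> ha hb /andP[t0 t1] i; rewrite !mxE.
have ? := ha i; have ? := hb i; nra.
Qed.
End Conv.
Theorem mainTheorem1 (R : realType) (n m1 m2 : nat)
  (Q : 'M[R]_n) (c : 'cV[R]_n) (A : 'M[R]_(m1, n)) (b : 'cV[R]_m1)
  (B : 'M[R]_(m2, n)) (d : 'cV[R]_m2) (rho tau1 tau2 : R)
  (x : nat -> 'cV[R]_n) (y : nat -> 'cV[R]_(m1 + m2))
  (xs : 'cV[R]_n) (ys : 'cV[R]_(m1 + m2)) :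
  (0 < n)%N -> (0 < m1)%N -> (0 < m2)%N ->
  Q^T = Q -> 0 <= rho -> 0 < tau1 -> 0 < tau2 ->
  let K : 'M[R]_(m1 + m2, n) := - col_mx A B in
  let r : 'cV[R]_(m1 + m2) := col_mx b d in
  let L := 2 * (opnorm Q + rho) in
  let Lh := Lhat Q c K r rho in
  let Phi := fun (u : 'cV[R]_n) (v : 'cV[R]_(m1 + m2)) =>
    ((Lh u v)%:E + indic (@in_box R n) u - indic (@inY R m1 m2) v)%E in
  (* PDHG iterates *)
  in_box (x 0%N) ->
  (forall k, (0 < k)%N ->
     is_proj (@inY R m1 m2) (y k.-1 + tau2 *: (K *m xbar x k.-1 + r)) (y k)) ->
  (forall k, (0 < k)%N ->
     is_proj (@in_box R n) (x k.-1 - tau1 *: gradx Q c K rho (x k.-1) (y k)) (x k)) ->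
  (* assumptions *)
  (forall k, (0 < k)%N -> convex_fun (fun u => Lh u (y k))) ->
  tau1 * tau2 * opnorm K ^+ 2 <= 1 / 4 ->
  4 * L * tau1 <= 1 ->
  saddle Phi xs ys ->
  let ysup := fun k : nat =>
    if k is k'.+1 then y k + tau2 *: (K *m (xbar x k - x k)) else y 0%N in
  let eps := fun k : nat =>
    Lh (x k) (y k)
    - lin (fun u => Lh u (y k)) (fun u => gradx Q c K rho u (y k)) (x k) (x k.-1) in
  (* (a) *)
  (forall k, (0 < k)%N ->
     subdiff (fun v => ((- Lh (x k) v)%:E + indic (@inY R m1 m2) v)%E) (y k)
       (tau2^-1 *: (ysup k.-1 - ysup k))
   /\ esubdiff (fun u => ((Lh u (y k))%:E + indic (@in_box R n) u)%E) (eps k) (x k)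
       (tau1^-1 *: (x k.-1 - x k))) /\
  (* (b) *)
  (forall k, (0 < k)%N ->
     eps k <= (8 * tau1)^-1 * enorm (x k - x k.-1) ^+ 2 /\
     tau2^-1 * enorm (ysup k - y k) ^+ 2 <= (4 * tau1)^-1 * enorm (x k - x k.-1) ^+ 2) /\
  (* (c) *)
  (forall N, (0 < N)%N ->
     (4 * tau1)^-1 * (\sum_(1 <= k < N.+1) enorm (x k - x k.-1) ^+ 2)
     + (2 * tau2)^-1 * (\sum_(1 <= k < N.+1) enorm (y k - ysup k.-1) ^+ 2)
     <= (2 * tau1)^-1 * enorm (xs - x 0%N) ^+ 2 + (2 * tau2)^-1 * enorm (ys - y 0%N) ^+ 2).
Proof.
move=> n0 m10 m20 QT rho0 t1p t2p K r L Lh Phi x0box Hy Hx Hconv HK HL Hsad ysup eps.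
have Y0 : inY (0 : 'cV[R]_(m1 + m2)) by move=> i; rewrite mxE.
have [xsB ysY Hsy Hsx] := saddle_facts _ _ _ _ _ _ _ x0box Y0 Hsad.
have xB : forall k, (0 < k)%N -> in_box (x k) by move=> k /Hx [].
have yY : forall k, (0 < k)%N -> inY (y k) by move=> k /Hy [].
have ysupE : forall j, ysup j = y j + tau2 *: (K *m (xbar x j - x j)).
  by case=> [|j] //=; rewrite subrr mulmx0 scaler0 addr0.
have xbarS : forall k, xbar x k.+1 - x k.+1 = x k.+1 - x k.
  by move=> k /=; rewrite scaler_nat mulr2n addrAC addrK.
have epsE : forall k, eps k = qf Q rho (x k - x k.-1).
  move=> k; rewrite /eps /lin /Lh.
  have := Lhat_exp Q c K r rho (x k.-1) (x k - x k.-1) (y k) QT.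
  rewrite subrKC => ->; ring.
have B1 : forall k, eps k <= (8 * tau1)^-1 * enorm (x k - x k.-1) ^+ 2.
  move=> k; rewrite epsE /qf; set dd := x k - x k.-1.
  have h1 : dot dd (Q *m dd) <= opnorm Q * enorm dd ^+ 2.
    apply: le_trans (CS dd (Q *m dd)) _.
    rewrite [enorm dd * _]mulrC expr2 mulrA.
    by apply: ler_wpM2r; [exact: enorm_ge0 | exact: opnorm_bound].
  have h2 : 0 <= rho * dot dd dd by rewrite mulr_ge0 // dot_ge0.
  have h3 : opnorm Q <= (8 * tau1)^-1.
    rewrite -div1r ler_pdivlMr ?mulr_gt0 //.
    have : 0 <= rho * tau1 by rewrite mulr_ge0 // ltW.
    rewrite /L in HL; lra.
  have h4 : opnorm Q * enorm dd ^+ 2 <= (8 * tau1)^-1 * enorm dd ^+ 2.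
    by apply: ler_wpM2r; rewrite // sqr_ge0.
  lra.
have B2 : forall k, (0 < k)%N ->
    tau2^-1 * enorm (ysup k - y k) ^+ 2 <= (4 * tau1)^-1 * enorm (x k - x k.-1) ^+ 2.
  case=> // k _ /=.
  have -> : ysup k.+1 - y k.+1 = tau2 *: (K *m (x k.+1 - x k)).
    by rewrite ysupE xbarS addrC addKr.
  rewrite enormZ (ger0_norm (ltW t2p)).
  set dd := x k.+1 - x k.
  have hK := opnorm_bound K dd.
  have e0 := enorm_ge0 (K *m dd).
  have d0 := enorm_ge0 dd.
  set e := enorm (K *m dd) in hK e0 *.
  set P := tau2 * opnorm K ^+ 2.
  have hP : P <= (4 * tau1)^-1.
    rewrite -div1r ler_pdivlMr ?mulr_gt0 // /P; lra.
  have hsq : e ^+ 2 <= opnorm K ^+ 2 * enorm dd ^+ 2.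
    rewrite -exprMn !expr2; nra.
  have -> : tau2^-1 * (tau2 * e) ^+ 2 = tau2 * e ^+ 2.
    by field; apply: lt0r_neq0.
  apply: (@le_trans _ _ (P * enorm dd ^+ 2)).
    rewrite /P -mulrA; have t20 : 0 <= tau2 by apply: ltW.
    by rewrite ler_pM2l.
  by apply: ler_wpM2r; rewrite // sqr_ge0.
have FY : forall k, (0 < k)%N -> forall z, inY z ->
    dot (tau2^-1 *: (ysup k.-1 - ysup k)) (z - y k) <= Lh (x k) (y k) - Lh (x k) z.
  case=> // k _ z hz /=.
  have vi := proj_vi _ _ _ _ (@Y_conv _ _ _) (Hy k.+1 isT) hz; rewrite /= in vi.
  have hw : Lh (x k.+1) z - Lh (x k.+1) (y k.+1)
      = dot (K *m x k.+1) (z - y k.+1) + dot r (z - y k.+1).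
    by rewrite /Lh /Lhat -dotDl (dotC (K *m x k.+1 + r)) dotBl; ring.
  rewrite !ysupE xbarS dotZl.
  set w := z - y k.+1 in vi hw *.
  set S := dot _ w.
  have hS : S <= tau2 * - (dot (K *m x k.+1) w + dot r w).
    rewrite /S !(mulmxBr, mulmxDr, dotDl, dotBl, dotZl, dotNl) in vi *; lra.
  have i2 : 0 <= tau2^-1 by rewrite invr_ge0 ltW.
  apply: le_trans (ler_wpM2l i2 hS) _.
  rewrite mulrA mulVf ?gt_eqF // mul1r; lra.
have FX : forall k, (0 < k)%N -> forall z, in_box z ->
    Lh (x k) (y k) + (dot (tau1^-1 *: (x k.-1 - x k)) (z - x k) - eps k) <= Lh z (y k).
  case=> // k _ z hz /=.
  have vi := proj_vi _ _ _ _ (@box_conv _ _) (Hx k.+1 isT) hz; rewrite /= in vi.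
  have gi := @grad_ineq _ _ _ Q c K r rho (y k.+1) QT (Hconv k.+1 isT) (x k) z.
  rewrite /eps /lin /=.
  set g := gradx Q c K rho (x k) (y k.+1) in vi gi *.
  have hg : dot g (z - x k) = dot g (x k.+1 - x k) + dot g (z - x k.+1).
    by rewrite !dotBr; ring.
  rewrite (addrAC (x k)) dotBl dotZl in vi.
  set w := z - x k.+1 in vi hg *.
  set D := dot (x k - x k.+1) w in vi *.
  have hD : tau1^-1 * D <= dot g w.
    by rewrite mulrC ler_pdivrMr //; lra.
  rewrite dotZl -/D; rewrite /Lh in gi *; lra.
split.
  move=> k k0; split.
  - move=> z /=; rewrite (indic_in (yY k k0)) adde0 subr0.
    case: (pselect (inY z)) => hz.
    + rewrite (indic_in hz) adde0 -EFinD lee_fin.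
      have := FY k k0 z hz; lra.
    + by rewrite (indic_out hz) addey // leey.
  - move=> z /=; rewrite (indic_in (xB k k0)) adde0.
    case: (pselect (in_box z)) => hz.
    + rewrite (indic_in hz) adde0 -EFinD lee_fin.
      exact: FX k k0 z hz.
    + by rewrite (indic_out hz) addey // leey.
split.
  by move=> k k0; split; [exact: B1 | exact: B2].
pose a j := (2 * tau1)^-1 * enorm (xs - x j) ^+ 2 + (2 * tau2)^-1 * enorm (ys - ysup j) ^+ 2.
have step : forall k, (0 < k)%N ->
    (4 * tau1)^-1 * enorm (x k - x k.-1) ^+ 2 + (2 * tau2)^-1 * enorm (y k - ysup k.-1) ^+ 2
    <= a k.-1 - a k.
  move=> k k0.
  have hx := FX k k0 xs xsB; have hy := FY k k0 ys ysY.
  have s1 := Hsy (y k) (yY k k0); have s2 := Hsx (x k) (xB k k0).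
  have b1 := B1 k; have b2 := B2 k k0.
  rewrite dotZl (polar (x k.-1) (x k) xs (x k)) subrr dot0l (dot_flip (x k.-1) (x k)) in hx.
  rewrite dotZl (polar (ysup k.-1) (ysup k) ys (y k)) (dot_flip (ysup k.-1) (y k)) in hy.
  rewrite /a !enorm_sq !invfM in b1 b2 *.
  lra.
have sum : forall N, (4 * tau1)^-1 * (\sum_(1 <= k < N.+1) enorm (x k - x k.-1) ^+ 2)
     + (2 * tau2)^-1 * (\sum_(1 <= k < N.+1) enorm (y k - ysup k.-1) ^+ 2) <= a 0%N - a N.
  elim=> [|N IH]; first by rewrite !big_geq // !mulr0 addr0 subrr.
  rewrite (@big_nat_recr _ _ _ N.+1 1 (fun k => enorm (x k - x k.-1) ^+ 2)) // (@big_nat_recr _ _ _ N.+1 1 (fun k => enorm (y k - ysup k.-1) ^+ 2)) // !mulrDr.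
  have := step N.+1 isT; rewrite /=; lra.
move=> N _; apply: le_trans (sum N) _.
have aN : 0 <= a N.
  by rewrite /a addr_ge0 // mulr_ge0 ?sqr_ge0 // invr_ge0 mulr_ge0 // ltW.
move: aN; rewrite /a /= => aN; lra.
Qed.
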